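(* Let $\Gamma=(G,w,\ell)$ be a tropical curve and $P\in\mathcal C_G$. Then $[T_P]$ is a theta-characteristic of $\Gamma$, and the map $$\beta\colon \mathcal C_G\longrightarrow T^{\mathrm{trop}}_\Gamma,\qquad P\longmapsto [T_P]$$ is a bijection.
   Context: A tropical curve is a triple $\Gamma=(G,w,\ell)$ where $G=(V,E)$ is a finite connected graph (loops and multiple edges allowed), $w\colon V\to\mathbb Z_{\ge 0}$ is a weight function with $2w(v)-2+\deg_G(v)>0$ for all $v$ (degrees count loops twice), and $\ell\colon E\to\mathbb R_{>0}$. Its genus is $g=\sum_v w(v)+|E|-|V|+1$. $\Gamma$ is regarded as a metric space by identifying each edge $e$ with a segment (a circle if $e$ is a loop) of length $\ell(e)$, glued at vertices; $p_e$ denotes the mid-point of $e$. Divisors, rational functions, $\operatorname{div}(f)$ (sum of outgoing slopes at each point) and $\operatorname{Pic}(\Gamma)=\operatorname{Div}(\Gamma)/\{\operatorname{div}(f)\}$ are as usual in tropical geometry; $[D]$ is the class of $D$. The canonical divisor is $K_\Gamma=\sum_{v\in V}(2w(v)-2+\deg_G(v))v$. A theta-characteristic of $\Gamma$ is a class $[D]\in\operatorname{Pic}(\Gamma)$ with $[2D]=[K_\Gamma]$; their set is $T^{\mathrm{trop}}_\Gamma$. $\mathcal C_G$ is the set of subsets $P\subseteq E$ such that every vertex has even degree in the subgraph spanned by $P$ (loops counting twice). For $P\in\mathcal C_G$, $$T_P:=\sum_{v\in V}\Big(\frac{\deg_P(v)}{2}-1+w(v)\Big)v+\sum_{e\in E\setminus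 P}p_e.$$ *)

(* Defs.v *)
From HB Require Import structures.
From mathcomp Require Import all_boot all_order all_algebra.
From mathcomp Require Import reals.
Set Implicit Arguments. Unset Strict Implicit. Unset Printing Implicit Defensive.
Import Order.TTheory GRing.Theory Num.Theory.
Local Open Scope ring_scope.

Section TropicalCurve.
Variable R : realType.
(* A finite graph G = (V,E) with loops/multi-edges: every edge e has an
   (arbitrarily chosen) orientation from [src e] to [tgt e]; a loop has
   src e = tgt e. *)
Variables (V E : finType) (src tgt : E -> V).
Variable w : V -> nat.
Variable l : E -> R.

(* degree of v in the subgraph spanned by P (loops count twice) *)
Definition degP (P : {set E}) (v : V) : nat :=
  #|[set e in P | src e == v]| + #|[set e in P | tgt e == v]|.
Definition degG (v : V) : nat := degP setT v.

Definition adjacent : rel V :=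
  fun u v => [exists e, ((src e == u) && (tgt e == v)) || ((src e == v) && (tgt e == u))].
Definition graph_connected : Prop := forall u v : V, connect adjacent u v.

Definition stable : Prop :=
  forall v : V, (0 < 2%:Z * (w v)%:Z - 2 + (degG v)%:Z)%R.

Definition even_subgraph (P : {set E}) : Prop := forall v : V, ~~ odd (degP P v).

(* Points of the metric space Gamma: a vertex [inl v], or an interior point
   [inr (e, t)] of edge e at distance t from src e, with 0 < t < l e. *)
Definition pt := (V + (E * R))%type.
Definition valid_pt (x : pt) : bool :=
  match x with inl _ => true | inr (e, t) => (0 < t) && (t < l e) end.

(* Divisors: finite formal sums sum n_i x_i, given as a list of pairs. *)
Definition divisor := seq (pt * int).
Definition is_divisor (D : divisor) : Prop := all (fun p => valid_pt p.1) D.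
Definition coef (D : divisor) (x : pt) : int := \sum_(p <- D | p.1 == x) p.2.
Definition dscale (k : int) (D : divisor) : divisor := [seq (p.1, k * p.2) | p <- D].

(* Rational functions: continuous piecewise linear functions with integer
   slopes and finitely many pieces.  Such f is given by its values at the
   vertices and, on each edge e (parametrised by t in [0, l e] from src e),
   by breakpoints 0 < b_1 < ... < b_k < l e and integer slopes s_0,...,s_k,
   s_i being the slope on [b_i, b_(i+1)] (b_0 = 0, b_(k+1) = l e). *)
Record ratfun := RatFun {
  rf_val : V -> R;
  rf_bp : E -> seq R;
  rf_sl : E -> seq int }.

Definition knots (f : ratfun) (e : E) : seq R := 0 :: rcons (rf_bp f e) (l e).

Definition rf_valid (f : ratfun) : Prop :=
  forall e : E,
    [/\ sorted <%R (knots f e),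
        size (rf_sl f e) = (size (rf_bp f e)).+1 &
        rf_val f (src e)
          + \sum_(i < size (rf_sl f e))
              ((rf_sl f e)`_i)%:~R * ((knots f e)`_i.+1 - (knots f e)`_i)
        = rf_val f (tgt e)].

(* div(f)(x) = sum of the outgoing slopes of f at x *)
Definition rf_div (f : ratfun) (x : pt) : int :=
  match x with
  | inl v => \sum_(e | src e == v) head 0 (rf_sl f e)
             - \sum_(e | tgt e == v) last 0 (rf_sl f e)
  | inr (e, t) =>
      if t \in rf_bp f e then
        let i := index t (rf_bp f e) in (rf_sl f e)`_i.+1 - (rf_sl f e)`_i
      else 0
  end.

Definition lin_equiv (D1 D2 : divisor) : Prop :=
  exists f : ratfun, rf_valid f /\
    forall x : pt, valid_pt x -> coef D1 x - coef D2 x = rf_div f x.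

Definition canonical_div : divisor :=
  [seq (inl v, 2%:Z * (w v)%:Z - 2 + (degG v)%:Z) | v <- enum V].

Definition theta_char (D : divisor) : Prop := lin_equiv (dscale 2 D) canonical_div.

(* T_P (for P in C_G, deg_P(v) is even so deg_P(v)/2 is exact) *)
Definition T_P (P : {set E}) : divisor :=
  [seq (inl v, ((degP P v)./2)%:Z - 1 + (w v)%:Z) | v <- enum V]
  ++ [seq (inr (e, l e / 2), 1%:Z) | e <- enum E & e \notin P].

End TropicalCurve.

(* Main.v *)
Require Import Defs.
From HB Require Import structures.
From mathcomp Require Import all_boot all_order all_algebra.
From mathcomp Require Import reals.
From mathcomp Require Import ring lra zify.
Import Order.TTheory GRing.Theory Num.Theory.
Local Open Scope ring_scope.
Set Implicit Arguments. Unset Strict Implicit. Unset Printing Implicit Defensive.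

Section Edge.
Variable R : realType.

Fixpoint seg (a : R) (bp : seq R) (sl : seq int) (L : R) {struct bp} : R :=
  match bp, sl with
  | [::], s :: _ => s%:~R * (L - a)
  | b :: bp', s :: sl' => s%:~R * (b - a) + seg b bp' sl' L
  | _, [::] => 0
  end.

Lemma seg_sum a bp sl L : size sl = (size bp).+1 ->
  \sum_(i < size sl) (sl`_i)%:~R * ((a :: rcons bp L)`_i.+1 - (a :: rcons bp L)`_i)
  = seg a bp sl L.
Proof.
elim: bp a sl => [|b bp IH] a [|s sl] //=.
  case: sl => //= _. by rewrite big_ord_recl big_ord0 addr0.
move=> [Hs]. rewrite big_ord_recl /=. congr (_ + _).
rewrite -(IH b sl Hs). apply: eq_bigr => i _. by [].
Qed.

Definition chg (t : R) (bp : seq R) (sl : seq int) : int :=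
  if t \in bp then sl`_(index t bp).+1 - sl`_(index t bp) else 0.

Lemma chg_cons t b bp s sl :
  chg t (b :: bp) (s :: sl) = if b == t then sl`_0 - s else chg t bp sl.
Proof.
rewrite /chg /= in_cons. case: (eqVneq t b) => [->|ne]; first by rewrite /= ?eqxx.
by [].
Qed.

Lemma chg_nil t sl : chg t [::] sl = 0.
Proof. by []. Qed.

Lemma seg_zero a bp sl L : uniq bp -> size sl = (size bp).+1 ->
  (forall t, t \in bp -> chg t bp sl = 0) ->
  seg a bp sl L = (head 0 sl)%:~R * (L - a) /\ last 0 sl = head 0 sl.
Proof.
elim: bp a sl => [|b bp IH] a [|s sl] //=.
  by case: sl.
move=> /andP[bnin ubp] [Hs] H0.
case: sl Hs H0 => [|s' sl] //= Hs H0.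
have := H0 b. rewrite in_cons eqxx chg_cons eqxx /= => /(_ isT) /eqP.
rewrite subr_eq0 => /eqP ess. subst s'.
have H0' : forall t, t \in bp -> chg t bp (s :: sl) = 0.
  move=> t tbp. have := H0 t. rewrite in_cons tbp orbT chg_cons.
  have -> : (b == t) = false by apply/eqP => bt; move: bnin; rewrite bt tbp.
  by move/(_ isT).
have [E1 E2] := IH b (s :: sl) ubp Hs H0'.
split; last exact: E2. rewrite E1 /= -mulrDr. congr (_ * _). by rewrite addrC subrKA.
Qed.

Lemma seg_one a bp sl L m c : uniq bp -> size sl = (size bp).+1 -> m \in bp ->
  (forall t, t \in bp -> chg t bp sl = if t == m then c else 0) ->
  seg a bp sl L = (head 0 sl)%:~R * (m - a) + (head 0 sl + c)%:~R * (L - m)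
  /\ last 0 sl = head 0 sl + c.
Proof.
elim: bp a sl => [|b bp IH] a [|s sl] //=.
move=> /andP[bnin ubp] [Hs] mbp H0.
case: sl Hs H0 => [|s' sl] //= Hs H0.
have Hb := H0 b. rewrite in_cons eqxx chg_cons eqxx /= in Hb.
have {}Hb := Hb isT.
have H0' : forall t, t \in bp -> chg t bp (s' :: sl) = if t == m then c else 0.
  move=> t tbp. have := H0 t. rewrite in_cons tbp orbT chg_cons.
  have -> : (b == t) = false by apply/eqP => bt; move: bnin; rewrite bt tbp.
  by move/(_ isT).
case: (eqVneq b m) => [bm|bm].
  subst b. rewrite eqxx in Hb.
  have H0'' : forall t, t \in bp -> chg t bp (s' :: sl) = 0.
    move=> t tbp. rewrite H0' //. case: eqP => // tm. by move: bnin; rewrite -tm tbp.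
  have [E1 E2] := @seg_zero m bp (s' :: sl) L ubp Hs H0''.
  have es : s' = s + c by rewrite -Hb addrC subrK.
  split; last by move: E2 => /= ->.
  by rewrite E1 /= es.
rewrite (negbTE bm) in Hb. move/eqP: Hb; rewrite subr_eq0 => /eqP es. subst s'.
move: mbp; rewrite in_cons eq_sym (negbTE bm) /= => mbp.
have [E1 E2] := IH b (s :: sl) ubp Hs mbp H0'.
split; last exact: E2.
rewrite E1 /= addrA -mulrDr. congr (_ * _ + _). by rewrite addrC subrKA.
Qed.

Lemma par_all bp sl : uniq bp -> size sl = (size bp).+1 ->
  (forall t, t \in bp -> (2 %| chg t bp sl)%Z) ->
  forall x, x \in sl -> (x %% 2)%Z = (head 0 sl %% 2)%Z.
Proof.
elim: bp sl => [|b bp IH] [|s sl] //=.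
  case: sl => //= _ _ _ x; rewrite inE => /eqP -> //.
move=> /andP[bnin ubp] [Hs] H0.
case: sl Hs H0 => [|s' sl] //= Hs H0.
have Hb := H0 b. rewrite in_cons eqxx chg_cons eqxx /= in Hb.
have {}Hb := Hb isT. rewrite -eqz_mod_dvd in Hb. move/eqP: Hb => Hb.
have H0' : forall t, t \in bp -> (2 %| chg t bp (s' :: sl))%Z.
  move=> t tbp. have := H0 t. rewrite in_cons tbp orbT chg_cons.
  have -> : (b == t) = false by apply/eqP => bt; move: bnin; rewrite bt tbp.
  by move/(_ isT).
move=> x; rewrite in_cons => /orP[/eqP ->//|xin].
by rewrite (IH (s' :: sl) ubp Hs H0' x xin) /= Hb.
Qed.

Definition h (z : int) : int := (z %/ 2)%Z.

Lemma h_spec z r : (z %% 2)%Z = r -> z = h z * 2 + r.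
Proof. move=> <-; exact: divz_eq. Qed.

Lemma h_specR z r : (z %% 2)%Z = r -> (z%:~R : R) = 2 * (h z)%:~R + r%:~R.
Proof. move=> /h_spec {1}->. by rewrite intrD intrM mulrC. Qed.

Lemma half_seg a bp sl L r : size sl = (size bp).+1 ->
  (forall z, z \in sl -> (z %% 2)%Z = r) ->
  2 * seg a bp (map h sl) L = seg a bp sl L - r%:~R * (L - a).
Proof.
elim: bp a sl => [|b bp IH] a [|s sl] //=.
  case: sl => //= _ Hr. rewrite (h_specR (Hr s _)) ?inE //. ring.
move=> [Hs] Hr. rewrite mulrDr IH //; last by move=> z zin; apply: Hr; rewrite in_cons zin orbT.
rewrite (h_specR (Hr s _)) ?in_cons ?eqxx //. ring.
Qed.

Lemma half_chg t bp sl r : size sl = (size bp).+1 ->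
  (forall z, z \in sl -> (z %% 2)%Z = r) ->
  2 * chg t bp (map h sl) = chg t bp sl.
Proof.
elim: bp sl => [|b bp IH] [|s sl] //=.
move=> [Hs] Hr. rewrite !chg_cons. case: eqP => _.
  case: sl Hs Hr => [|s' sl] //= Hs Hr.
  have E1 : s = h s * 2 + r by apply: h_spec; apply: Hr; rewrite in_cons eqxx.
  have E2 : s' = h s' * 2 + r by apply: h_spec; apply: Hr; rewrite !in_cons eqxx orbT.
  rewrite [in RHS]E1 [in RHS]E2. ring.
apply: IH => // z zin; apply: Hr; by rewrite in_cons zin orbT.
Qed.

Fixpoint mk (m : R) (bp : seq R) (sl : seq int) {struct bp} : seq R * seq int :=
  match bp, sl with
  | b :: bp', s :: sl' =>
      if b < m then let r := mk m bp' sl' in (b :: r.1, (h s + 1) :: r.2)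
      else if b == m then (bp, (h s + 1) :: map h sl')
      else (m :: bp, (h s + 1) :: map h sl)
  | [::], s :: _ => ([:: m], [:: h s + 1; h s])
  | _, [::] => (bp, [::])
  end.

Lemma mk_size m bp sl : size sl = (size bp).+1 ->
  size (mk m bp sl).2 = (size (mk m bp sl).1).+1.
Proof.
elim: bp sl => [|b bp IH] [|s sl] //=.
move=> [Hs]. case: ifP => _ /=. by rewrite IH.
case: ifP => _ /=; by rewrite size_map // Hs.
Qed.

Lemma mk_head m bp s sl : head 0 (mk m bp (s :: sl)).2 = h s + 1.
Proof. case: bp => [|b bp] //=. by case: ifP => //; case: ifP. Qed.

Lemma last_cons0 (x : int) y : y != [::] -> last 0 (x :: y) = last 0 y.
Proof. by case: y. Qed.

Lemma mk_last m bp sl : size sl = (size bp).+1 ->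
  last 0 (mk m bp sl).2 = h (last 0 sl).
Proof.
elim: bp sl => [|b bp IH] [|s sl] //=.
  by case: sl.
move=> [Hs]. case: ifP => _ /=.
  have Hs' := mk_size m Hs.
  have -> : last s sl = last 0 sl by clear Hs'; case: sl Hs.
  rewrite -(IH sl Hs). by case: (mk m bp sl) Hs' => b1 [|x s1] //=.
case: ifP => _ /=.
  case: sl Hs => [|x sl] //= _. by rewrite last_map.
by rewrite last_map.
Qed.

Lemma mk_seg m a bp sl L : size sl = (size bp).+1 ->
  (forall z, z \in sl -> (z %% 2)%Z = 1) ->
  2 * seg a (mk m bp sl).1 (mk m bp sl).2 L = seg a bp sl L + (m - a) - (L - m).
Proof.
elim: bp a sl => [|b bp IH] a [|s sl] //=.
  case: sl => //= _ Hr. rewrite (h_specR (Hr s _)) ?inE // intrD. ring.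
move=> [Hs] Hr.
have Hs1 : (s %% 2)%Z = 1 by apply: Hr; rewrite in_cons eqxx.
have Hr' : forall z, z \in sl -> (z %% 2)%Z = 1.
  by move=> z zin; apply: Hr; rewrite in_cons zin orbT.
case: ifP => _ /=.
  rewrite mulrDr IH // (h_specR Hs1) intrD. ring.
case: ifP => [/eqP bm|_] /=.
  subst b. rewrite mulrDr (@half_seg m bp sl L 1 Hs Hr') (h_specR Hs1) intrD. ring.
have Hr2 : forall z, z \in s :: sl -> (z %% 2)%Z = 1.
  by move=> z; rewrite in_cons => /orP[/eqP ->|/Hr'].
have Hs2 : size (s :: sl) = (size (b :: bp)).+1 by rewrite /= Hs.
rewrite mulrDr (@half_seg m (b :: bp) (s :: sl) L 1 Hs2 Hr2) /=.
rewrite (h_specR Hs1) intrD. ring.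
Qed.

Lemma mk_chg m bp sl t : size sl = (size bp).+1 -> sorted <%R bp ->
  (forall z, z \in sl -> (z %% 2)%Z = 1) ->
  2 * chg t (mk m bp sl).1 (mk m bp sl).2 = chg t bp sl - (if t == m then 2 else 0).
Proof.
elim: bp sl => [|b bp IH] [|s sl] //=.
  case: sl => //= _ _ Hr. rewrite /chg !inE.
  case: (eqVneq t m) => [->|ne] /=; last by rewrite mulr0 subr0.
  rewrite eqxx /=. ring.
move=> [Hs] Hsort Hr.
have Hs1 : (s %% 2)%Z = 1 by apply: Hr; rewrite in_cons eqxx.
have Hr' : forall z, z \in sl -> (z %% 2)%Z = 1.
  by move=> z zin; apply: Hr; rewrite in_cons zin orbT.
have Hsort' : sorted <%R bp := path_sorted Hsort.
have E1 : s = h s * 2 + 1 by apply: h_spec.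
case: ifP => bm /=.
  rewrite !chg_cons. case: eqP => [bt|_]; last exact: IH.
  subst t. rewrite (lt_eqF bm).
  clear Hr; case: sl Hs Hr' => [|s' sl] //= Hs Hr'.
  have Hx := mk_head m bp s' sl.
  have -> : (mk m bp (s' :: sl)).2`_0 = h s' + 1.
    by case: (mk m bp (s' :: sl)) Hx => b1 [|x s1].
  have E2 : s' = h s' * 2 + 1 by apply: h_spec; apply: Hr'; rewrite in_cons eqxx.
  rewrite [in RHS]E1 [in RHS]E2. ring.
case: ifP => [/eqP bmE|bm'] /=.
  subst b. rewrite !chg_cons. case: eqP => [<-|tm].
    rewrite eqxx. clear Hr. case: sl Hs Hr' => [|s' sl] //= Hs Hr'.
    have E2 : s' = h s' * 2 + 1 by apply: h_spec; apply: Hr'; rewrite in_cons eqxx.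
    rewrite [in RHS]E1 [in RHS]E2. ring.
  have -> : (t == m) = false by apply/eqP => tm'; apply: tm.
  rewrite subr0. exact: half_chg Hs Hr'.
have mb : m < b.
  by rewrite lt_neqAle eq_sym bm' /=; rewrite leNgt bm.
rewrite chg_cons [in RHS]chg_cons. case: eqP => [<-|tm].
  rewrite eqxx.
  rewrite bm'.
  have -> : chg m bp sl = 0.
    rewrite /chg. case: ifP => // mbp.
    have := order_path_min lt_trans Hsort. move/allP/(_ m mbp) => bm2.
    by move: (lt_trans mb bm2); rewrite ltxx.
  rewrite /=. ring.
have -> : (t == m) = false by apply/eqP => tm'; apply: tm.
rewrite subr0 -(chg_cons t b bp s sl).
have Hs2 : size (s :: sl) = (size (b :: bp)).+1 by rewrite /= Hs.
have Hr2 : forall z, z \in s :: sl -> (z %% 2)%Z = 1.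
  by move=> z; rewrite in_cons => /orP[/eqP ->|/Hr'].
exact: (@half_chg t (b :: bp) (s :: sl) 1 Hs2 Hr2).
Qed.

Lemma mk_sorted m a bp sl L : a < m -> m < L -> sorted <%R (a :: rcons bp L) ->
  sorted <%R (a :: rcons (mk m bp sl).1 L).
Proof.
elim: bp a sl => [|b bp IH] a [|s sl] //= am mL.
  by rewrite am mL.
move=> /andP[ab Hp].
case: ifP => bm /=. by apply/andP; split => //; exact: IH.
case: ifP => [/eqP bmE|bm'] /=. by rewrite ab.
have mb : m < b by rewrite lt_neqAle eq_sym bm' /= leNgt bm.
by rewrite am mb.
Qed.

End Edge.

Lemma path_lastL (R : realType) (a : R) bp L : path <%R a (rcons bp L) -> forall t, t \in bp -> t < L.
Proof.
elim: bp a => [|b bp IH] a //= /andP[ab Hp] t. rewrite in_cons => /orP[/eqP ->|tin]; last exact: IH Hp t tin.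
have := order_path_min lt_trans Hp => /allP/(_ L). by rewrite mem_rcons in_cons eqxx => /(_ isT).
Qed.

Lemma sorted_info (R : realType) (bp : seq R) (L : R) :
  sorted <%R (0 :: rcons bp L) ->
  [/\ sorted <%R bp, uniq bp & forall t, t \in bp -> 0 < t < L].
Proof.
move=> /= Hp0. have := Hp0. rewrite rcons_path => /andP[Hp HL].
have Hs : sorted <%R bp := path_sorted Hp.
split => //; first exact: lt_sorted_uniq.
have Hall := order_path_min lt_trans Hp.
move=> t tin. rewrite (allP Hall t tin) /=. exact: path_lastL Hp0 t tin.
Qed.

Section Glob.
Variable R : realType.
Variables (V E : finType) (src tgt : E -> V).
Variable w : V -> nat.
Variable l : E -> R.

Definition ind (P : {set E}) (e : E) : int := if e \in P then 1 else 0.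

Lemma coef_dscale k (D : divisor R V E) x : coef (dscale k D) x = k * coef D x.
Proof.
rewrite /coef /dscale big_map mulr_sumr. by apply: eq_bigr.
Qed.

Lemma sum_enum_pick (T : finType) (x : T) (P : pred T) (F : T -> int) :
  (forall y, P y -> y = x) -> \sum_(y <- enum T | P y) F y = if P x then F x else 0.
Proof.
move=> HP. rewrite big_enum_cond /=. case: ifP => Px.
  rewrite (bigD1 x) /=; last by rewrite Px.
  rewrite big1 ?addr0 // => y /andP[Py yx].
  by move: yx; rewrite (HP y Py) eqxx.
rewrite big1 // => y Py. by move: Px; rewrite -(HP y Py) Py.
Qed.

Lemma coef_K_v v : coef (canonical_div R src tgt w) (inl v)
  = 2%:Z * (w v)%:Z - 2 + (degG src tgt v)%:Z.
Proof.
rewrite /coef /canonical_div big_map /=.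
rewrite (@sum_enum_pick V v (fun v' => inl v' == inl v :> pt R V E)) ?eqxx //.
by move=> y /eqP [].
Qed.

Lemma coef_K_e z : coef (canonical_div R src tgt w) (inr z : pt R V E) = 0.
Proof. by rewrite /coef /canonical_div big_map big1. Qed.

Lemma coef_TP_v P v : coef (T_P src tgt w l P) (inl v)
  = ((degP src tgt P v)./2)%:Z - 1 + (w v)%:Z.
Proof.
rewrite /coef /T_P big_cat /= [X in _ + X]big_map [X in _ + X]big1 // addr0 big_map.
rewrite (@sum_enum_pick V v (fun v' => inl v' == inl v :> pt R V E)) ?eqxx //.
by move=> y /eqP [].
Qed.

Lemma coef_TP_e P e t : coef (T_P src tgt w l P) (inr (e, t))
  = if (e \notin P) && (t == l e / 2) then 1 else 0.
Proof.
rewrite /coef /T_P big_cat /= [X in X + _]big_map [X in X + _]big1 // add0r big_map big_filter_cond /=.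
rewrite (@sum_enum_pick E e (fun e' => (e' \notin P) && (inr (e', l e' / 2) == inr (e, t) :> pt R V E))).
  have -> : (inr (e, l e / 2) == inr (e, t) :> pt R V E) = (t == l e / 2).
    by apply/eqP/eqP => [[->]|->].
  by [].
by move=> y /andP[_ /eqP [->]].
Qed.

Lemma card_sum (A : {set E}) : (#|A|%:Z) = \sum_(x in A) (1 : int).
Proof. by rewrite sumr_const natz. Qed.

Lemma degP_sum P v : (degP src tgt P v)%:Z =
  \sum_(e | src e == v) ind P e + \sum_(e | tgt e == v) ind P e.
Proof.
rewrite /degP PoszD !card_sum. congr (_ + _); rewrite big_mkcond [RHS]big_mkcond;
  apply: eq_bigr => e _; rewrite inE /ind; by case: (e \in P); case: eqP.
Qed.


Lemma maxprin (x : V -> R) (sg : E -> int) (L : E -> R) :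
  (0 < #|V|)%N -> graph_connected src tgt -> (forall e, 0 < L e) ->
  (forall e, x (tgt e) - x (src e) = (sg e)%:~R * L e) ->
  (forall v, \sum_(e | src e == v) sg e = \sum_(e | tgt e == v) sg e) ->
  forall e, sg e = 0.
Proof.
move=> /card_gt0P [v0 _] Hc HL Hx Hs.
have [vm _ Hvm] : exists2 vm : V, true & forall v, x v <= x vm.
  case: (@arg_maxP _ _ V v0 xpredT x isT) => i _ H. by exists i => // v; exact: H.
have step : forall v, x v = x vm -> forall e, (src e == v) || (tgt e == v) -> sg e = 0.
  move=> v Hv.
  have Hsrc : forall e, src e == v -> sg e <= 0.
    move=> e /eqP se. have := Hx e. rewrite se Hv => Hxe.
    have : (sg e)%:~R * L e <= 0 by rewrite -Hxe subr_le0.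
    by rewrite pmulr_lle0 // lerz0.
  have Htgt : forall e, tgt e == v -> 0 <= sg e.
    move=> e /eqP te. have := Hx e. rewrite te Hv => Hxe.
    have : 0 <= (sg e)%:~R * L e by rewrite -Hxe subr_ge0.
    by rewrite pmulr_lge0 // ler0z.
  have S1 : \sum_(e | src e == v) sg e <= 0 by apply: sumr_le0.
  have S2 : 0 <= \sum_(e | tgt e == v) sg e by apply: sumr_ge0.
  have Z1 : \sum_(e | src e == v) sg e = 0 by apply/eqP; rewrite eq_le S1 Hs S2.
  have Z2 : \sum_(e | tgt e == v) sg e = 0 by rewrite -Hs.
  move=> e /orP[se|te].
    have Z1' : \sum_(e | src e == v) - sg e = 0 by rewrite sumrN Z1 oppr0.
    have Hn : forall i, src i == v -> 0 <= - sg i by move=> i /Hsrc; rewrite oppr_ge0.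
    have := psumr_eq0P Hn Z1' se. by move/eqP; rewrite oppr_eq0 => /eqP.
  apply: (psumr_eq0P Htgt Z2 te).
set S := [pred v | x v == x vm].
have Hmove : forall u v, adjacent src tgt u v -> u \in S -> v \in S.
  move=> u v /existsP[e /orP[/andP[/eqP su /eqP tv]|/andP[/eqP sv /eqP tu]]];
    rewrite !inE => /eqP Hu.
    have := step u Hu e. rewrite su eqxx => /(_ isT) sg0.
    have := Hx e. rewrite sg0 mul0r su tv => /eqP; rewrite subr_eq0 => /eqP ->. by rewrite Hu.
  have := step u Hu e. rewrite tu eqxx orbT => /(_ isT) sg0.
  have := Hx e. rewrite sg0 mul0r sv tu => /eqP; rewrite subr_eq0 => /eqP <-. by rewrite Hu.
have Hcl : closed (adjacent src tgt) S.
  move=> u v Huv. apply/idP/idP; first exact: Hmove.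
  apply: Hmove. move: Huv => /existsP[e He]. apply/existsP; exists e. by rewrite orbC.
have Hall : forall v, x v = x vm.
  move=> v. have := closed_connect Hcl (Hc vm v). by rewrite !inE eqxx => /esym /eqP.
move=> e. have := Hx e. rewrite !Hall subrr => /esym /eqP.
rewrite mulf_eq0 intr_eq0 (gt_eqF (HL e)) orbF. by move/eqP.
Qed.

Lemma rf_div_e (f : ratfun R V E) e t :
  rf_div src tgt f (inr (e, t)) = chg t (rf_bp f e) (rf_sl f e).
Proof. by []. Qed.

Lemma rf_div_v (f : ratfun R V E) v :
  rf_div src tgt f (inl v) = \sum_(e | src e == v) head 0 (rf_sl f e)
             - \sum_(e | tgt e == v) last 0 (rf_sl f e).
Proof. by []. Qed.

Lemma half_bounds (L : R) : 0 < L -> 0 < L / 2 < L.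
Proof. move=> HL. apply/andP; split; lra. Qed.

Lemma degG_sum v : (degG src tgt v)%:Z =
  \sum_(e | src e == v) (1 : int) + \sum_(e | tgt e == v) (1 : int).
Proof.
rewrite /degG degP_sum. congr (_ + _); apply: eq_bigr => e _; by rewrite /ind inE.
Qed.

Lemma part1 (Hl : forall e, 0 < l e) P : even_subgraph src tgt P ->
  theta_char src tgt w l (T_P src tgt w l P).
Proof.
move=> HP.
pose f := RatFun (fun _ : V => 0 : R) (fun e => if e \in P then [::] else [:: l e / 2])
  (fun e => if e \in P then [:: 0] else [:: -1; 1]).
exists f; split.
  move=> e. have /andP[m0 mL] := half_bounds (Hl e).
  rewrite /knots /f /=. case: ifP => eP.
    split => //=; first by rewrite (Hl e).
    by rewrite big_ord_recl big_ord0 /= mul0r !add0r.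
  split => //=; first by rewrite m0 mL.
  rewrite !big_ord_recl big_ord0 /=. rewrite /bump /=. 
  have -> : ((-1 : int)%:~R : R) = -1 by [].
  lra.
move=> [v|[e t]] Hv.
  rewrite coef_dscale coef_TP_v coef_K_v rf_div_v.
  have E1 : \sum_(e | src e == v) head 0 (rf_sl f e) = \sum_(e | src e == v) ind P e - \sum_(e | src e == v) 1.
    rewrite -sumrB. apply: eq_bigr => e _. rewrite /f /ind /=. by case: ifP.
  have E2 : \sum_(e | tgt e == v) last 0 (rf_sl f e) = \sum_(e | tgt e == v) 1 - \sum_(e | tgt e == v) ind P e.
    rewrite -sumrB. apply: eq_bigr => e _. rewrite /f /ind /=. by case: ifP.
  rewrite E1 E2.
  have D1 := degP_sum P v. have D2 := degG_sum v. have Ev := HP v.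
  move: D1 D2 Ev. set a1 := \sum_(e | src e == v) ind P e. set a2 := \sum_(e | tgt e == v) ind P e.
  set n1 := \sum_(e | src e == v) (1:int). set n2 := \sum_(e | tgt e == v) (1:int).
  move=> D1 D2 Ev. clearbody a1 a2 n1 n2. lia.
rewrite coef_dscale coef_TP_e coef_K_e rf_div_e /f /=.
case: (boolP (e \in P)) => eP /=; first by rewrite /chg.
rewrite chg_cons /chg /= eq_sym. by case: ifP.
Qed.

Lemma part2 (HV : (0 < #|V|)%N) (Hc : graph_connected src tgt)
  (Hl : forall e, 0 < l e) P Q :
  even_subgraph src tgt P -> even_subgraph src tgt Q ->
  lin_equiv src tgt l (T_P src tgt w l P) (T_P src tgt w l Q) -> P = Q.
Proof.
move=> HP HQ [f [Hf Hdiv]].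
pose c e : int := (if e \notin P then 1 else 0) - (if e \notin Q then 1 else 0).
pose sg e : int := 2 * head 0 (rf_sl f e) + c e.
have Hedge : forall e, last 0 (rf_sl f e) = head 0 (rf_sl f e) + c e /\
    rf_val f (tgt e) - rf_val f (src e) = (sg e)%:~R * (l e / 2).
  move=> e. have [Hsort Hsize Hcont] := Hf e.
  have [_ Hu Hb] := sorted_info Hsort.
  have /andP[m0 mL] := half_bounds (Hl e).
  have Hchg : forall t, 0 < t < l e -> chg t (rf_bp f e) (rf_sl f e) = if t == l e / 2 then c e else 0.
    move=> t Ht. rewrite -rf_div_e -Hdiv; last by [].
    rewrite !coef_TP_e /c. by case: (t == l e / 2); rewrite ?andbT ?andbF.
  have Hseg : rf_val f (tgt e) - rf_val f (src e) = seg 0 (rf_bp f e) (rf_sl f e) (l e).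
    by rewrite -Hcont -seg_sum // addrC addKr.
  rewrite Hseg /sg.
  case: (boolP (l e / 2 \in rf_bp f e)) => mbp.
    have [-> ->] := @seg_one R 0 (rf_bp f e) (rf_sl f e) (l e) (l e / 2) (c e) Hu Hsize mbp (fun t tin => Hchg t (Hb t tin)).
    split => //. rewrite !intrD !intrM. 
    have -> : ((2 : int)%:~R : R) = 2 by [].
    by field.
  have c0 : c e = 0.
    have := Hchg (l e / 2). rewrite m0 mL eqxx /chg (negbTE mbp). by move/(_ isT) <-.
  have Hz : forall t, t \in rf_bp f e -> chg t (rf_bp f e) (rf_sl f e) = 0.
    by move=> t tin; rewrite (Hchg t (Hb t tin)) c0; case: ifP.
  have [-> ->] := @seg_zero R 0 (rf_bp f e) (rf_sl f e) (l e) Hu Hsize Hz.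
  rewrite c0 !addr0. split => //. rewrite intrM.
  have -> : ((2 : int)%:~R : R) = 2 by [].
  by field.
have Hsum : forall v, \sum_(e | src e == v) sg e = \sum_(e | tgt e == v) sg e.
  move=> v. have := Hdiv (inl v) isT.
  rewrite !coef_TP_v rf_div_v.
  have -> : \sum_(e | tgt e == v) last 0 (rf_sl f e) = \sum_(e | tgt e == v) (head 0 (rf_sl f e) + c e).
    by apply: eq_bigr => e _; case: (Hedge e).
  have Ec : forall e, c e = ind Q e - ind P e.
    move=> e. rewrite /c /ind. by case: (e \in P); case: (e \in Q).
  have Es : forall (Pr : pred E), \sum_(e | Pr e) sg e = 2 * \sum_(e | Pr e) head 0 (rf_sl f e)
      + (\sum_(e | Pr e) ind Q e - \sum_(e | Pr e) ind P e).
    move=> Pr. rewrite mulr_sumr -sumrB -big_split. apply: eq_bigr => e _. by rewrite /sg Ec.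
  have Eh : forall (Pr : pred E), \sum_(e | Pr e) (head 0 (rf_sl f e) + c e) = \sum_(e | Pr e) head 0 (rf_sl f e)
      + (\sum_(e | Pr e) ind Q e - \sum_(e | Pr e) ind P e).
    move=> Pr. rewrite -sumrB -big_split. apply: eq_bigr => e _. by rewrite Ec.
  rewrite !Es !Eh.
  have D1 := degP_sum P v. have D2 := degP_sum Q v. have Ev := HP v. have Ev' := HQ v.
  move: D1 D2 Ev Ev'.
  set h1 := \sum_(e | src e == v) head 0 (rf_sl f e).
  set h2 := \sum_(e | tgt e == v) head 0 (rf_sl f e).
  set p1 := \sum_(e | src e == v) ind P e. set p2 := \sum_(e | tgt e == v) ind P e.
  set q1 := \sum_(e | src e == v) ind Q e. set q2 := \sum_(e | tgt e == v) ind Q e.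
  clearbody h1 h2 p1 p2 q1 q2. move=> *. lia.
have Hsg0 := @maxprin (rf_val f) sg (fun e => l e / 2) HV Hc
  (fun e => proj1 (andP (half_bounds (Hl e)))) (fun e => proj2 (Hedge e)) Hsum.
apply/setP => e. have := Hsg0 e. rewrite /sg /c.
case: (e \in P); case: (e \in Q) => //=; lia.
Qed.

Lemma head_map_h (s : seq int) : head 0 (map h s) = h (head 0 s).
Proof. by case: s. Qed.

Lemma last_map_h (s : seq int) : last 0 (map h s) = h (last 0 s).
Proof. case: s => [|x s] //=. by rewrite last_map. Qed.

Lemma mk_head' (m : R) (bp : seq R) (sl : seq int) : size sl = (size bp).+1 ->
  head 0 (mk m bp sl).2 = h (head 0 sl) + 1.
Proof. case: sl => [|s sl] //= _. exact: mk_head. Qed.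

Lemma last_in (sl : seq int) : sl != [::] -> last 0 sl \in sl.
Proof. case: sl => [|s sl] //= _. exact: mem_last. Qed.

Lemma part3 (Hl : forall e, 0 < l e) (D : divisor R V E) :
  is_divisor l D -> theta_char src tgt w l D ->
  exists2 P : {set E}, even_subgraph src tgt P & lin_equiv src tgt l D (T_P src tgt w l P).
Proof.
move=> _ [f [Hf Hdiv]].
have Hch : forall e t, 0 < t < l e -> chg t (rf_bp f e) (rf_sl f e) = 2 * coef D (inr (e, t)).
  move=> e t Ht. rewrite -rf_div_e -Hdiv //. by rewrite coef_dscale coef_K_e subr0.
pose r e := (head 0 (rf_sl f e) %% 2)%Z.
have Hne : forall e, rf_sl f e != [::].
  by move=> e; have [_ Hs _] := Hf e; rewrite -size_eq0 Hs.
have Hpar : forall e x, x \in rf_sl f e -> (x %% 2)%Z = r e.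
  move=> e. have [Hsort Hsize _] := Hf e. have [_ Hu Hb] := sorted_info Hsort.
  move=> x xin. apply: (par_all Hu Hsize _ xin) => t tin. rewrite Hch; last exact: Hb.
  apply/dvdzP. exists (coef D (inr (e, t))). by rewrite mulrC.
pose P := [set e | r e == 0].
have Hr : forall e, r e = 1 - ind P e.
  move=> e. rewrite /ind inE. have : (0 <= r e < 2)%R by rewrite /r; lia.
  case: eqP => [->|]; lia.
pose hd e := h (head 0 (rf_sl f e)). pose hl e := h (last 0 (rf_sl f e)).
have Ehd : forall e, head 0 (rf_sl f e) = hd e * 2 + r e.
  move=> e. apply: h_spec. apply: Hpar. by case: (rf_sl f e) (Hne e) => [|s sl] //= _; rewrite mem_head.
have Ehl : forall e, last 0 (rf_sl f e) = hl e * 2 + r e.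
  move=> e. apply: h_spec. apply: Hpar. exact: last_in.
have Hsplit : forall (Pr : pred E) (F G : E -> int),
    \sum_(e | Pr e) (F e + G e) = \sum_(e | Pr e) F e + \sum_(e | Pr e) G e.
  by move=> Pr F G; rewrite big_split.
have Hvert : forall v, 2 * coef D (inl v) - (2%:Z * (w v)%:Z - 2 + (degG src tgt v)%:Z)
    = 2 * \sum_(e | src e == v) hd e - 2 * \sum_(e | tgt e == v) hl e
      - \sum_(e | src e == v) ind P e + \sum_(e | tgt e == v) ind P e
      + \sum_(e | src e == v) 1 - \sum_(e | tgt e == v) 1.
  move=> v. have := Hdiv (inl v) isT. rewrite coef_dscale coef_K_v rf_div_v => ->.
  rewrite (eq_bigr (fun e => hd e * 2 + (1 - ind P e))); last by move=> e _; rewrite Ehd Hr.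
  rewrite [X in _ - X](eq_bigr (fun e => hl e * 2 + (1 - ind P e))); last by move=> e _; rewrite Ehl Hr.
  rewrite !Hsplit !sumrN -!mulr_suml. ring.
have HP : even_subgraph src tgt P.
  move=> v. have := Hvert v. have D1 := degP_sum P v. have D2 := degG_sum v.
  move: D1 D2.
  set a1 := \sum_(e | src e == v) ind P e. set a2 := \sum_(e | tgt e == v) ind P e.
  set n1 := \sum_(e | src e == v) (1:int). set n2 := \sum_(e | tgt e == v) (1:int).
  set x1 := \sum_(e | src e == v) hd e. set x2 := \sum_(e | tgt e == v) hl e.
  clearbody a1 a2 n1 n2 x1 x2. move=> *. lia.
exists P => //.
pose mkE e := mk (l e / 2) (rf_bp f e) (rf_sl f e).
pose g := RatFun (fun v => rf_val f v / 2)
  (fun e => if e \in P then rf_bp f e else (mkE e).1)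
  (fun e => if e \in P then map h (rf_sl f e) else (mkE e).2).
have HrP : forall e, e \in P -> forall x, x \in rf_sl f e -> (x %% 2)%Z = 0.
  by move=> e eP x xin; rewrite (Hpar e x xin) Hr /ind eP.
have HrN : forall e, e \notin P -> forall x, x \in rf_sl f e -> (x %% 2)%Z = 1.
  by move=> e eP x xin; rewrite (Hpar e x xin) Hr /ind (negbTE eP).
exists g; split.
  move=> e. have [Hsort Hsize Hcont] := Hf e. have [Hs Hu Hb] := sorted_info Hsort.
  have /andP[m0 mL] := half_bounds (Hl e).
  rewrite /knots seg_sum // in Hcont.
  rewrite /knots /g /=. case: (boolP (e \in P)) => eP.
    have Hsz : size (map h (rf_sl f e)) = (size (rf_bp f e)).+1 by rewrite size_map.
    split => //. rewrite seg_sum //.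
    have := @half_seg R 0 (rf_bp f e) (rf_sl f e) (l e) 0 Hsize (HrP e eP).
    rewrite mul0r subr0. move: Hcont. lra.
  have Hsz := @mk_size R (l e / 2) (rf_bp f e) (rf_sl f e) Hsize.
  split => //; first exact: mk_sorted.
  rewrite seg_sum //.
  have := @mk_seg R (l e / 2) 0 (rf_bp f e) (rf_sl f e) (l e) Hsize (HrN e eP).
  move: Hcont. rewrite /mkE. lra.
move=> [v|[e t]] Hv.
  rewrite coef_TP_v rf_div_v /g /=.
  have Eh : forall e, head 0 (if e \in P then [seq h i | i <- rf_sl f e] else (mkE e).2) = hd e + (1 - ind P e).
    move=> e. rewrite /ind. case: ifP => eP.
      by rewrite head_map_h addr0.
    have [_ Hsize _] := Hf e. by rewrite mk_head' // subr0.
  have El : forall e, last 0 (if e \in P then [seq h i | i <- rf_sl f e] else (mkE e).2) = hl e.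
    move=> e. case: ifP => eP; first by rewrite last_map_h.
    have [_ Hsize _] := Hf e. by rewrite mk_last.
  rewrite (eq_bigr _ (fun e _ => Eh e)) (eq_bigr _ (fun e _ => El e)) Hsplit sumrB.
  have := Hvert v. have D1 := degP_sum P v. have D2 := degG_sum v. have Ev := HP v.
  move: D1 D2 Ev.
  set a1 := \sum_(e | src e == v) ind P e. set a2 := \sum_(e | tgt e == v) ind P e.
  set n1 := \sum_(e | src e == v) (1:int). set n2 := \sum_(e | tgt e == v) (1:int).
  set x1 := \sum_(e | src e == v) hd e. set x2 := \sum_(e | tgt e == v) hl e.
  clearbody a1 a2 n1 n2 x1 x2. move=> *. lia.
rewrite coef_TP_e rf_div_e /g /=.
have [Hsort Hsize _] := Hf e. have [Hs Hu Hb] := sorted_info Hsort.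
have := Hch e t Hv.
case: (boolP (e \in P)) => eP /=.
  have := @half_chg R t (rf_bp f e) (rf_sl f e) 0 Hsize (HrP e eP). lia.
have := @mk_chg R (l e / 2) (rf_bp f e) (rf_sl f e) t Hsize Hs (HrN e eP).
rewrite /mkE. case: (t == l e / 2); lia.
Qed.

End Glob.

Theorem proposition3p2 (R : realType) (V E : finType) (src tgt : E -> V)
  (w : V -> nat) (l : E -> R)
  (HV : (0 < #|V|)%N)
  (Hconn : graph_connected src tgt)
  (Hstab : stable src tgt w)
  (Hl : forall e : E, 0 < l e) :
  (* [T_P] is a theta-characteristic for every P in C_G *)
  (forall P : {set E}, even_subgraph src tgt P ->
     theta_char src tgt w l (T_P src tgt w l P))
  (* beta is injective *)
  /\ (forall P Q : {set E}, even_subgraph src tgt P -> even_subgraph src tgt Q ->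
        lin_equiv src tgt l (T_P src tgt w l P) (T_P src tgt w l Q) -> P = Q)
  (* beta is surjective onto T^trop *)
  /\ (forall D : divisor R V E, is_divisor l D -> theta_char src tgt w l D ->
        exists2 P : {set E}, even_subgraph src tgt P &
          lin_equiv src tgt l D (T_P src tgt w l P)).
Proof.
split; first by move=> P HP; apply: part1.
split; first by move=> P Q HP HQ Heq; apply: (part2 HV Hconn Hl HP HQ Heq).
by move=> D HD HT; apply: part3.
Qed.
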